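(* Let $\delta\in(0,1)$, let $S\subseteq V$ be fixed, and let $\mathcal{R}$ be a collection of $T$ independent IBSs drawn from $\Omega^n$. Let $c=\ln(1/\delta)$ and $p=p(S)$. Define $$f_l(\mathcal{R},\delta)=\min\left\{\hat{\mathbb{B}}(S)-\frac{\rho c\Gamma}{3T},\ \hat{\mathbb{B}}(S)-\frac{\Gamma}{T}\left(\frac{\rho c}{3}-cp+\sqrt{\Big(\frac{\rho c}{3}-cp\Big)^2+2Tpc\frac{\hat{\mathbb{B}}(S)}{\Gamma}}\right)\right\}.$$ Then $\Pr[\mathbb{B}(S)\ge f_l(\mathcal{R},\delta)]\ge1-\delta$.
   Context: Setting: $G=(V,E)$ is a directed graph under the Independent Cascade model with edge probabilities $p(u,v)\in(0,1)$. A random live-edge graph $g$ keeps each edge $e$ independently with probability $p(e)$, and $R(g,S)$ is the set of nodes reachable from $S$ in $g$. Each node has benefit $b(u)\ge0$. The benefit function is $\mathbb{B}(S)=\mathbb{E}_g[\sum_{u\in R(g,S)}b(u)]$. Let $\Gamma=\sum_u b(u)>0$. For each node $u$, $\gamma(u)=1-\prod_{v\in N_{in}(u)}(1-p(v,u))$, and $\Phi=\sum_u\gamma(u)b(u)>0$. IBS distribution $\Omega^n$: pick a source $u$ with probability $\gamma(u)b(u)/\Phi$. Then output the set of nodes that can reach $u$ in a random live-edge graph, conditioned on at least one in-edge of $u$ being kept. For a collection $\mathcal{R}=\{R_1,\dots,R_T\}$ of IBSs, the estimator is $$\hat{\mathbb{B}}(S)=\frac{\Phi}{T}\sum_{j=1}^T\min\{1,|S\cap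 R_j|\}+\sum_{v\in S}(1-\gamma(v))b(v).$$ Further definitions: - $\mu_{\min}(S)=\sum_{v\in S}(1-\gamma(v))b(v)/\Gamma$; - $\rho=\Phi/\Gamma$; - $\mu_{\max}(S)=\rho+\mu_{\min}(S)$; - $p(S)=\min\{\rho,\ \mu_{\max}(S)+\mu_{\min}(S)-2\sqrt{\mu_{\min}(S)\mu_{\max}(S)}\}$. *)

(* Defs.v *)
From mathcomp Require Import all_boot.
From Stdlib Require Import Reals.
Set Implicit Arguments. Unset Strict Implicit. Unset Printing Implicit Defensive.

Open Scope R_scope.

Section IBS.
Variable V : finType.
Variable E : {set V * V}.
Variable p : V -> V -> R.
Variable b : V -> R.

Definition rsum {I : finType} (P : pred I) (F : I -> R) : R :=
  \big[Rplus/0]_(i | P i) F i.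
Definition rprod {I : finType} (P : pred I) (F : I -> R) : R :=
  \big[Rmult/1]_(i | P i) F i.

Definition live_prob (g : {set V * V}) : R :=
  if g \subset E then
    rprod (fun e => e \in E) (fun e => if e \in g then p e.1 e.2 else 1 - p e.1 e.2)
  else 0.

Definition live_rel (g : {set V * V}) : rel V := fun x y => (x, y) \in g.

Definition reach (g : {set V * V}) (S : {set V}) : {set V} :=
  [set v | [exists u in S, connect (live_rel g) u v]].

Definition benefit (S : {set V}) : R :=
  rsum predT (fun g : {set V * V} =>
    live_prob g * rsum (fun u => u \in reach g S) b).

Definition Gamma : R := rsum predT b.

Definition gamma (u : V) : R :=
  1 - rprod (fun v => (v, u) \in E) (fun v => 1 - p v u).

Definition Phi : R := rsum predT (fun u => gamma u * b u).

Definition rrset (g : {set V * V}) (u : V) : {set V} :=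
  [set v | connect (live_rel g) v u].

Definition in_kept (g : {set V * V}) (u : V) : bool :=
  [exists v, ((v, u) \in E) && ((v, u) \in g)].

(* probability that an IBS drawn from Omega^n equals Rset:
   source u with prob gamma(u) b(u) / Phi, then the reverse-reachable set of u
   in a random live-edge graph, conditioned on in_kept g u *)
Definition ibs_prob (Rset : {set V}) : R :=
  rsum predT (fun u =>
    (gamma u * b u / Phi) *
    (rsum (fun g => in_kept g u && (rrset g u == Rset)) live_prob /
     rsum (fun g => in_kept g u) live_prob)).

Definition sample_prob (T : nat) (Rs : {ffun 'I_T -> {set V}}) : R :=
  rprod predT (fun j => ibs_prob (Rs j)).

(* probability of an event on the collection (a Prop, made decidable classically
   through the real order decision in the uses below) *)
Definition sample_Pr (T : nat) (ev : {ffun 'I_T -> {set V}} -> bool) : R :=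
  rsum ev (@sample_prob T).

Definition Bhat (S : {set V}) (T : nat) (Rs : {ffun 'I_T -> {set V}}) : R :=
  Phi / INR T * rsum predT (fun j : 'I_T => INR (minn 1 #|S :&: Rs j|))
  + rsum (fun v => v \in S) (fun v => (1 - gamma v) * b v).

Definition mu_min (S : {set V}) : R :=
  rsum (fun v => v \in S) (fun v => (1 - gamma v) * b v) / Gamma.
Definition rho : R := Phi / Gamma.
Definition mu_max (S : {set V}) : R := rho + mu_min S.
Definition pS (S : {set V}) : R :=
  Rmin rho (mu_max S + mu_min S - 2 * sqrt (mu_min S * mu_max S)).

Definition f_l (S : {set V}) (T : nat) (Rs : {ffun 'I_T -> {set V}}) (delta : R) : R :=
  let c := ln (1 / delta) in
  let q := pS S in
  let B := Bhat S Rs in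
  Rmin (B - rho * c * Gamma / (3 * INR T))
       (B - Gamma / INR T *
            (rho * c / 3 - c * q
             + sqrt ((rho * c / 3 - c * q) ^ 2 + 2 * INR T * q * c * (B / Gamma)))).

Definition Rleb (x y : R) : bool := if Rle_dec x y then true else false.

End IBS.

(* Main.v *)
Require Import Defs.
From HB Require Import structures.
From mathcomp Require Import all_boot.
From Stdlib Require Import Reals Lra Psatz.
From Coquelicot Require Import Coquelicot.
Open Scope R_scope.

Lemma exp_neg_bound x : x <= 0 -> exp x <= 1 + x + x^2/2.
Proof.
move=> hx.
case: (Req_dec x 0) => [->|hx0]; first by rewrite exp_0; lra.
have hlt : x < 0 by lra.
set h := fun y => 1 + y + y^2/2 - exp y.
have [c [Hc1 Hc2]] : exists c, h 0 - h x = (1 + c - exp c) * (0 - x) /\ x < c < 0.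
  apply: (MVT_cor2 h (fun c => 1 + c - exp c)) => // c _.
  apply/is_derive_Reals; rewrite /h; auto_derive => //; field.
have := exp_ineq1_le c.
have : h 0 = 0 by rewrite /h exp_0; lra.
rewrite /h in Hc1 *. nra.
Qed.

Lemma exp_pos_bound x : 0 <= x < 3 -> exp x <= 1 + x + 3 * x^2 / (2 * (3 - x)).
Proof.
move=> [hx0 hx3].
case: (Req_dec x 0) => [->|hx].
  rewrite exp_0; lra.
set phi := fun y => (1 + y + 3 * y^2 / (2 * (3 - y))) * exp (- y).
have [c [Hc1 Hc2]] : exists c, phi x - phi 0 =
   (c^3 / (2 * (3 - c)^2) * exp (- c)) * (x - 0) /\ 0 < c < x.
  apply: (MVT_cor2 phi (fun c => c^3 / (2 * (3 - c)^2) * exp (- c))); first lra.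
  move=> c Hc.
  apply/is_derive_Reals; rewrite /phi; auto_derive.
    lra.
  field; lra.
have hphi0 : phi 0 = 1 by rewrite /phi Ropp_0 exp_0; field.
have hpos : 0 <= c ^ 3 / (2 * (3 - c) ^ 2) * exp (- c) * (x - 0).
  apply: Rmult_le_pos; last lra.
  apply: Rmult_le_pos; last by apply: Rlt_le; apply: exp_pos.
  apply: Rdiv_le_0_compat; first by apply: pow_le; lra.
  have : 0 < 3 - c by lra. nra.
have : 1 <= phi x by lra.
rewrite /phi.
have he : exp x * exp (- x) = 1 by rewrite -exp_plus Rplus_opp_r exp_0.
have hex := exp_pos x. have hemx := exp_pos (- x).
move=> H.
have : exp x * 1 <= exp x * ((1 + x + 3 * x ^ 2 / (2 * (3 - x))) * exp (- x)).
  by apply: Rmult_le_compat_l; lra.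
nra.
Qed.

Lemma exp_bern x c : 0 <= c < 3 -> x <= c -> exp x <= 1 + x + 3 / (2 * (3 - c)) * x ^ 2.
Proof.
move=> hc hx.
have hK : 1 / 2 <= 3 / (2 * (3 - c)).
  apply: (Rmult_le_reg_r (2 * (3 - c))); first lra.
  have -> : 3 / (2 * (3 - c)) * (2 * (3 - c)) = 3 by field; lra.
  lra.
have hx2 := pow2_ge_0 x.
case: (Rle_lt_dec x 0) => hx0.
  have := @exp_neg_bound x hx0.
  have : 1 / 2 * x ^ 2 <= 3 / (2 * (3 - c)) * x ^ 2 by apply: Rmult_le_compat_r.
  intros; lra.
have := @exp_pos_bound x (conj (Rlt_le _ _ hx0) (Rle_lt_trans _ _ _ hx (proj2 hc))).
have : 3 * x ^ 2 / (2 * (3 - x)) <= 3 / (2 * (3 - c)) * x ^ 2.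
  have -> : 3 * x ^ 2 / (2 * (3 - x)) = 3 / (2 * (3 - x)) * x ^ 2 by field; lra.
  apply: Rmult_le_compat_r => //.
  apply: Rmult_le_compat_l; first lra.
  apply: Rinv_le_contravar; lra.
intros; lra.
Qed.

Lemma alg_fail (G T rho c P m s : R) :
  0 < G -> 0 < T -> 0 < rho -> 0 < c -> 0 <= P -> 0 <= m ->
  G * m < G * (m + s / T) - rho * c * G / (3 * T) ->
  G * m < G * (m + s / T) - G / T * (rho * c / 3 - c * P +
      sqrt ((rho * c / 3 - c * P) ^ 2 + 2 * T * P * c * (G * (m + s / T) / G))) ->
  rho * c / 3 + sqrt ((rho * c / 3) ^ 2 + 2 * c * T * (P * m)) < s.
Proof.
move=> hG hT hr hc hP hm h1 h2.
remember (rho * c / 3) as a eqn:ha.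
have hGT : 0 < G / T by apply: Rdiv_lt_0_compat.
have hs : a < s.
  have e : G * (m + s / T) - rho * c * G / (3 * T) = G * m + G / T * (s - a).
    rewrite ha; field; (intros; lra).
  rewrite e in h1. (intros; nra).
have hw : G * (m + s / T) / G = m + s / T by field; (intros; lra).
rewrite hw in h2.
remember ((a - c * P) ^ 2 + 2 * T * P * c * (m + s / T)) as w eqn:hwdef.
have h3 : sqrt w < s - a + c * P.
  have : G / T * (a - c * P + sqrt w) < G / T * s.
    have -> : G / T * s = G * (s / T) by field; (intros; lra).
    (intros; lra).
  move=> h; (intros; nra).
have h4 : w < (s - a + c * P) ^ 2.
  case: (Rle_lt_dec 0 w) => hw0.
    have := sqrt_sqrt _ hw0. have := sqrt_pos w. (intros; nra).
  have := pow2_ge_0 (s - a + c * P); (intros; lra).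
have h5 : s ^ 2 - 2 * a * s > 2 * c * T * (P * m).
  move: h4; rewrite hwdef.
  have -> : 2 * T * P * c * (m + s / T) = 2 * c * T * (P * m) + 2 * c * P * s by field; (intros; lra).
  (intros; nra).
have hW : 0 <= a ^ 2 + 2 * c * T * (P * m).
  have h6 : 0 <= c * T * (P * m) by apply: Rmult_le_pos; [apply: Rmult_le_pos; lra | apply: Rmult_le_pos]. have := pow2_ge_0 a. (intros; lra).
have : sqrt (a ^ 2 + 2 * c * T * (P * m)) < sqrt ((s - a) ^ 2).
  apply: sqrt_lt_1_alt; split => //; (intros; nra).
rewrite sqrt_pow2; (intros; lra).
Qed.

Lemma Rmin_cases (x y : R) : Rmin x y = x \/ Rmin x y = y.
Proof. by case: (Rle_lt_dec x y) => h; [left; rewrite Rmin_left | right; rewrite Rmin_right]; lra. Qed.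

Lemma var_bound (rho q mn P : R) :
  0 < rho -> 0 <= q <= 1 -> 0 <= mn ->
  P = Rmin rho ((rho + mn) + mn - 2 * sqrt (mn * (rho + mn))) ->
  rho ^ 2 * (q * (1 - q)) <= P * (rho * q + mn).
Proof.
move=> hr hq hmn ->.
case: (Rmin_cases rho ((rho + mn) + mn - 2 * sqrt (mn * (rho + mn)))) => ->.
  have : 0 <= rho * q * q by apply: Rmult_le_pos; [apply: Rmult_le_pos|]; lra.
  have : 0 <= rho * mn by apply: Rmult_le_pos; lra.
  intros; nra.
have hM : 0 <= rho + mn by lra.
rewrite sqrt_mult_alt //.
have hx := sqrt_sqrt _ hmn. have hy := sqrt_sqrt _ hM.
have hx0 := sqrt_pos mn. have hy0 := sqrt_pos (rho + mn).
have e1 : rho ^ 2 * (q * (1 - q)) = (rho * q) * (rho + mn - (rho * q + mn)) by ring.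
rewrite e1.
have := pow2_ge_0 (rho * q + mn - sqrt mn * sqrt (rho + mn)).
have key : forall x y r m0, x * x = m0 -> y * y = r + m0 ->
   (r + m0 + m0 - 2 * (x * y)) * (r * q + m0) - (r * q) * (r + m0 - (r * q + m0)) = (r * q + m0 - x * y) ^ 2.
  move=> x y r m0 h1 h2. subst m0. have -> : r = y * y - x * x by lra. ring.
have := key _ _ _ _ hx hy.
intros; lra.
Qed.

Lemma P_ge0 (rho mn : R) : 0 < rho -> 0 <= mn ->
  0 <= Rmin rho ((rho + mn) + mn - 2 * sqrt (mn * (rho + mn))).
Proof.
move=> hr hmn; case: (Rmin_cases rho ((rho + mn) + mn - 2 * sqrt (mn * (rho + mn)))) => ->; first lra.
have hM : 0 <= rho + mn by lra.
rewrite sqrt_mult_alt //.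
have hx := sqrt_sqrt _ hmn. have hy := sqrt_sqrt _ hM.
have := pow2_ge_0 (sqrt mn - sqrt (rho + mn)).
intros; nra.
Qed.

Lemma exponent_pos (T rho c v : R) : 0 < T -> 0 < rho -> 0 < c -> 0 < v ->
  let a := rho * c / 3 in
  let ts := a + sqrt (a ^ 2 + 2 * c * T * v) in
  let D := T * v + rho * ts / 3 in
  let lam := ts / D in
  [/\ 0 <= lam, lam * rho < 3, 0 < ts &
   - lam * ts + T * (3 / (2 * (3 - lam * rho))) * lam ^ 2 * v = - c].
Proof.
move=> hT hr hc hv a ts D lam.
have ha : 0 < a by rewrite /a; apply: Rdiv_lt_0_compat; [apply: Rmult_lt_0_compat|]; lra.
have hW : 0 <= a ^ 2 + 2 * c * T * v.
  have : 0 <= c * T * v by apply: Rmult_le_pos; [apply: Rmult_le_pos|]; lra.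
  have := pow2_ge_0 a. intros; lra.
have hu := sqrt_sqrt _ hW. have hu0 := sqrt_pos (a ^ 2 + 2 * c * T * v).
move: hu hu0; rewrite -/ts.
have -> : sqrt (a ^ 2 + 2 * c * T * v) = ts - a by rewrite /ts; ring.
move=> hu hu0.
have hts : 0 < ts by lra.
have hTv : 0 < T * v by apply: Rmult_lt_0_compat.
have hD : 0 < D.
  have : 0 < rho * ts / 3 by apply: Rdiv_lt_0_compat; [apply: Rmult_lt_0_compat|]; lra.
  rewrite /D; intros; lra.
have hts2 : ts ^ 2 = 2 * c * D.
  rewrite /D. have : ts * ts = 2 * a * ts + 2 * c * T * v by nra.
  rewrite /a; intros; nra.
have hlr : lam * rho = 3 * (rho * ts / 3) / D by rewrite /lam; field; lra.
split.
- rewrite /lam; apply: Rlt_le; apply: Rdiv_lt_0_compat; lra.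
- rewrite hlr. apply/(Rmult_lt_reg_r D); first lra.
  have -> : 3 * (rho * ts / 3) / D * D = rho * ts by field; lra.
  rewrite /D; lra.
- exact: hts.
have h3 : 3 - lam * rho = 3 * (T * v) / D.
  have hD' : T * v + rho * ts / 3 <> 0 by move: hD; rewrite /D => ?; lra.
  rewrite hlr /D; field; have := Rmult_lt_0_compat _ _ hr hts; intros; lra.
rewrite h3 /lam.
have -> : - (ts / D) * ts + T * (3 / (2 * (3 * (T * v) / D))) * (ts / D) ^ 2 * v = - (ts ^ 2) / (2 * D).
  field; split; lra.
rewrite hts2; field; lra.
Qed.

Lemma exponent_zero (T rho c : R) : 0 < rho -> 0 < c ->
  let a := rho * c / 3 in
  let ts := a + sqrt (a ^ 2 + 2 * c * T * 0) in
  let lam := 3 / (2 * rho) in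
  [/\ 0 <= lam, lam * rho < 3, 0 < ts &
   - lam * ts + T * (3 / (2 * (3 - lam * rho))) * lam ^ 2 * 0 = - c].
Proof.
move=> hr hc a ts lam.
have ha : 0 < a by rewrite /a; apply: Rdiv_lt_0_compat; [apply: Rmult_lt_0_compat|]; lra.
have hts : ts = 2 * a.
  rewrite /ts (_ : a ^ 2 + 2 * c * T * 0 = a ^ 2); last by ring.
  rewrite sqrt_pow2; lra.
rewrite hts /lam. split.
- apply: Rlt_le; apply: Rdiv_lt_0_compat; lra.
- have -> : 3 / (2 * rho) * rho = 3 / 2 by field; lra. lra.
- lra.
rewrite /a; field; lra.
Qed.

HB.instance Definition _ := Monoid.isComLaw.Build R 0 Rplus (fun x y z => esym (Rplus_assoc x y z)) Rplus_comm Rplus_0_l.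
HB.instance Definition _ := Monoid.isComLaw.Build R 1 Rmult (fun x y z => esym (Rmult_assoc x y z)) Rmult_comm Rmult_1_l.
HB.instance Definition _ := Monoid.isMulLaw.Build R 0 Rmult Rmult_0_l Rmult_0_r.
HB.instance Definition _ := Monoid.isAddLaw.Build R Rmult Rplus Rmult_plus_distr_r Rmult_plus_distr_l.

Ltac abs_big := repeat match goal with |- context [@bigop.body ?T ?I ?x ?r ?F] =>
  let A := fresh "A" in set A := @bigop.body T I x r F end.
Ltac blra := abs_big; intros; lra.
Ltac bnra := abs_big; intros; nra.
Ltac bring := abs_big; intros; ring.

Lemma rsum_distr (I J : finType) (F : I -> J -> R) :
  rprod predT (fun i => rsum predT (F i)) =
  rsum predT (fun f : {ffun I -> J} => rprod predT (fun i => F i (f i))).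
Proof. exact: bigA_distr_bigA. Qed.

Lemma rsum_sets (W : finType) (F : W -> bool -> R) :
  rsum predT (fun g : {set W} => rprod predT (fun e => F e (e \in g))) =
  rprod predT (fun e => F e true + F e false).
Proof.
have -> : rprod predT (fun e => F e true + F e false) =
          rprod predT (fun e => rsum predT (F e)).
  apply: eq_bigr => e _. by rewrite /rsum big_bool.
rewrite rsum_distr /rsum.
rewrite (reindex (fun f : {ffun W -> bool} => [set e | f e])) /=.
  apply: eq_bigr => f _; apply: eq_bigr => e _. by rewrite inE.
exists (fun g : {set W} => [ffun e => e \in g]).
  by move=> f _; apply/ffunP => e; rewrite ffunE inE.
by move=> g _; apply/setP => e; rewrite inE ffunE.
Qed.

Section Graph.
Variable V : finType.
Variable E : {set V * V}.
Variable p : V -> V -> R.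
Variable b : V -> R.
Hypothesis hp : forall e, e \in E -> 0 < p e.1 e.2 < 1.

Definition Fe (e : V * V) (bit : bool) : R :=
  if e \in E then (if bit then p e.1 e.2 else 1 - p e.1 e.2) else (if bit then 0 else 1).

Lemma live_probE g : live_prob E p g = rprod predT (fun e => Fe e (e \in g)).
Proof.
rewrite /live_prob /rprod /Fe.
case: ifP => hsub.
  rewrite big_mkcond /=; apply: eq_bigr => e _.
  case: ifP => // heE; case: ifP => // heg.
  by move/subsetP: hsub => /(_ e heg); rewrite heE.
have [e heg heE] : exists2 e, e \in g & e \notin E.
  move/negbT: hsub => /subsetPn [e h1 h2]; by exists e.
rewrite (bigD1 e) //= (negbTE heE) heg Rmult_0_l //.
Qed.

Lemma live_prob_ge0 g : 0 <= live_prob E p g.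
Proof.
rewrite live_probE /rprod; apply: (big_ind (fun x => 0 <= x)) => //.
  lra.
  by move=> x y; apply: Rmult_le_pos.
move=> e _; rewrite /Fe; case: ifP => heE; last by case: (e \in g); lra.
have := hp e heE; case: (e \in g); lra.
Qed.

Lemma live_prob_sub g : live_prob E p g <> 0 -> g \subset E.
Proof. by rewrite /live_prob; case: ifP. Qed.

Lemma live_prob_sum : rsum predT (live_prob E p) = 1.
Proof.
transitivity (rsum predT (fun g : {set V * V} => rprod predT (fun e => Fe e (e \in g)))).
  by apply: eq_bigr => g _; exact: live_probE.
rewrite rsum_sets /rprod big1 // => e _.
rewrite /Fe; case: ifP => _; lra.
Qed.

Lemma not_kept_sum u :
  rsum (fun g => ~~ in_kept E g u) (live_prob E p) =
  rprod (fun v => (v, u) \in E) (fun v => 1 - p v u).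
Proof.
set Fu := fun e bit => Fe e bit * (if (e \in E) && (e.2 == u) && bit then 0 else 1).
have step : forall g, (if ~~ in_kept E g u then live_prob E p g else 0) =
       rprod predT (fun e => Fu e (e \in g)).
  move=> g; rewrite live_probE /rprod /Fu big_split /=.
  case: ifP => hk.
    rewrite [X in _ = _ * X]big1 ?Rmult_1_r // => e _.
    case: ifP => // /andP [/andP [h1 /eqP h2] h3].
    move: hk; rewrite /in_kept; move/negP; case; apply/existsP; exists e.1.
    by rewrite -h2 -surjective_pairing h1 h3.
  move/negbFE: hk => /existsP [v /andP [h1 h2]].
  rewrite [X in _ = _ * X](bigD1 (v, u)) //= h1 h2 eqxx /= Rmult_0_l Rmult_0_r //.
transitivity (rsum predT (fun g : {set V * V} => rprod predT (fun e => Fu e (e \in g)))).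
  by rewrite /rsum big_mkcond /=; apply: eq_bigr => g _; exact: step.
rewrite rsum_sets.
rewrite /rprod.
transitivity (\big[Rmult/1]_(e : V * V) (if (e \in E) && (e.2 == u) then 1 - p e.1 e.2 else 1)).
  apply: eq_bigr => e _; rewrite /Fu /Fe.
  case: (e \in E); case: (e.2 == u) => /=; lra.
transitivity (\big[Rmult/1]_(x : V) \big[Rmult/1]_(y : V) (if ((x, y) \in E) && (y == u) then 1 - p x y else 1)).
  by rewrite pair_bigA; apply: eq_bigr => -[x y].
rewrite [RHS]big_mkcond /=; apply: eq_bigr => x _.
rewrite (bigD1 u) //= eqxx andbT big1 ?Rmult_1_r // => y /negbTE ->.
by rewrite andbF.
Qed.

Lemma kept_sum u : rsum (fun g => in_kept E g u) (live_prob E p) = gamma E p u.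
Proof.
rewrite /gamma -not_kept_sum -live_prob_sum /rsum [X in _ = X - _](bigID (fun g => in_kept E g u)) /=.
lra.
Qed.

End Graph.

Lemma rsum_ge0 (I : finType) (P : pred I) (F : I -> R) :
  (forall i, P i -> 0 <= F i) -> 0 <= rsum P F.
Proof.
move=> h; rewrite /rsum; apply: (big_ind (fun x => 0 <= x)) => //; first lra.
by move=> x y; lra.
Qed.

Lemma rprod_ge0 (I : finType) (P : pred I) (F : I -> R) :
  (forall i, P i -> 0 <= F i) -> 0 <= rprod P F.
Proof.
move=> h; rewrite /rprod; apply: (big_ind (fun x => 0 <= x)) => //; first lra.
by move=> x y; apply: Rmult_le_pos.
Qed.

Section IBS2.
Variable V : finType.
Variable E : {set V * V}.
Variable p : V -> V -> R.
Variable b : V -> R.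
Hypothesis hp : forall e, e \in E -> 0 < p e.1 e.2 < 1.
Hypothesis hb : forall u, 0 <= b u.
Hypothesis hPhi : 0 < Phi E p b.

Definition Kk u := rsum (fun g => in_kept E g u) (live_prob E p).

Lemma ibs_exp (h : {set V} -> R) :
  rsum predT (fun Rs => ibs_prob E p b Rs * h Rs) =
  rsum predT (fun u => gamma E p u * b u / Phi E p b *
    (rsum (fun g => in_kept E g u) (fun g => live_prob E p g * h (rrset g u)) / Kk u)).
Proof.
rewrite /ibs_prob /rsum /Kk.
under eq_bigr => Rs _ do rewrite big_distrl /=.
rewrite exchange_big /=.
apply: eq_bigr => u _.
rewrite /Rdiv.
set c := gamma E p u * b u * / Phi E p b * / rsum (fun g => in_kept E g u) (live_prob E p).
transitivity (\big[Rplus/0]_(Rs : {set V}) (c *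
   (rsum (fun g => in_kept E g u && (rrset g u == Rs)) (live_prob E p) * h Rs))).
  apply: eq_bigr => Rs _; rewrite /c /rsum. set N := \big[Rplus/0]_(i | _ && _) _. set K := \big[Rplus/0]_(i | in_kept E i u) _. ring.
rewrite -big_distrr /= /c.
transitivity (gamma E p u * b u * / Phi E p b * / rsum (fun g => in_kept E g u) (live_prob E p) *
  \big[Rplus/0]_(g | in_kept E g u) (live_prob E p g * h (rrset g u))); last first.
  rewrite /rsum. set N := \big[Rplus/0]_(i | in_kept E i u) (_ * _). set K := \big[Rplus/0]_(i | in_kept E i u) _. ring.
congr (_ * _).
rewrite (partition_big (fun g => rrset g u) predT) //=.
apply: eq_bigr => Rs _.
rewrite /rsum big_distrl /=.
apply: eq_bigr => g /andP [_ /eqP ->] //.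
Qed.


Lemma rsum_le (I : finType) (P : pred I) (F G : I -> R) :
  (forall i, P i -> F i <= G i) -> rsum P F <= rsum P G.
Proof.
move=> h; rewrite /rsum; apply: (big_ind2 (fun x y => x <= y)) => //; first lra.
by move=> x1 x2 y1 y2; lra.
Qed.

Definition Xs (S : {set V}) (Rs : {set V}) : R := INR (minn 1 #|S :&: Rs|).

Lemma X_rr S g u : Xs S (rrset g u) = if u \in reach g S then 1 else 0.
Proof.
rewrite /Xs /reach inE; case: ifP.
  move/existsP => [v /andP [hv hc]].
  have : leq 1 #|S :&: rrset g u|.
    by apply/card_gt0P; exists v; rewrite !inE hv.
  by move=> h; rewrite (minn_idPl h).
move/negbT => hn.
suff -> : #|S :&: rrset g u| = 0%nat by [].
apply/eqP; rewrite cards_eq0; apply/eqP/setP => v; rewrite !inE.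
apply/negP => /andP [hv hc]; move/negP: hn; apply; apply/existsP; exists v; by rewrite hv.
Qed.

Lemma reach_kept S g u : u \in reach g S -> u \notin S -> g \subset E -> in_kept E g u.
Proof.
rewrite /reach inE => /existsP [v /andP [hv /connectP [q hq hl]]] huS hsub.
case/lastP: q hq hl => [|q w] /=.
  by move=> _ hvu; move: huS; rewrite hvu hv.
rewrite rcons_path last_rcons => /andP [_ he] hw; subst w.
apply/existsP; exists (last v q); rewrite /live_rel in he.
by rewrite he (subsetP hsub _ he).
Qed.

Lemma gamma_eq u : Kk u = gamma E p u.
Proof. exact: (@kept_sum V E p u). Qed.

Lemma Kk_bounds u : 0 <= Kk u <= 1.
Proof.
split; first by apply: rsum_ge0 => g _; exact: (@live_prob_ge0 V E p hp).
rewrite -(@live_prob_sum V E p) /Kk /rsum [X in _ <= X](bigID (fun g => in_kept E g u)) /=.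
have : 0 <= \big[Rplus/0]_(i | ~~ in_kept E i u) live_prob E p i.
  by apply: rsum_ge0 => g _; exact: (@live_prob_ge0 V E p hp).
blra.
Qed.

Lemma E_one : rsum predT (fun Rs => ibs_prob E p b Rs * 1) = 1.
Proof.
rewrite ibs_exp.
transitivity (rsum predT (fun u => gamma E p u * b u / Phi E p b)).
  apply: eq_bigr => u _.
  have -> : rsum (fun g => in_kept E g u) (fun g => live_prob E p g * 1) = Kk u.
    by apply: eq_bigr => g _; rewrite Rmult_1_r.
  rewrite gamma_eq.
  case: (Req_dec (gamma E p u) 0) => [->|hg]; first by rewrite /Rdiv !Rmult_0_l.
  by field; split => //; lra.
rewrite /rsum -big_distrl /= -/(rsum predT (fun u => gamma E p u * b u)).
by rewrite -/(Phi E p b); field; lra.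
Qed.

Lemma benefit_split S :
  Phi E p b * rsum predT (fun Rs => ibs_prob E p b Rs * Xs S Rs)
  + rsum (fun v => v \in S) (fun v => (1 - gamma E p v) * b v) = benefit E p b S.
Proof.
rewrite ibs_exp.
set A := fun u => rsum (fun g => in_kept E g u) (fun g => live_prob E p g * Xs S (rrset g u)).
have hA : forall u, 0 <= A u <= Kk u.
  move=> u; split.
    apply: rsum_ge0 => g _; apply: Rmult_le_pos; first exact: (@live_prob_ge0 V E p hp).
    rewrite X_rr; case: ifP => _; lra.
  apply: rsum_le => g _; rewrite X_rr.
  have := @live_prob_ge0 V E p hp g; case: ifP => _; lra.
have step1 : Phi E p b * rsum predT (fun u => gamma E p u * b u / Phi E p b * (A u / Kk u)) =
   rsum predT (fun u => b u * A u).
  rewrite /rsum big_distrr /=; apply: eq_bigr => u _.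
  rewrite gamma_eq.
  case: (Req_dec (gamma E p u) 0) => [hg|hg].
    have : A u = 0 by have := hA u; rewrite gamma_eq hg; lra.
    by move->; rewrite hg /Rdiv !Rmult_0_l !Rmult_0_r.
  field; split => //; lra.
rewrite step1.
have step2 : benefit E p b S = rsum predT (fun u => b u *
    rsum predT (fun g => live_prob E p g * (if u \in reach g S then 1 else 0))).
  rewrite /benefit /rsum.
  transitivity (\big[Rplus/0]_(g : {set V * V}) \big[Rplus/0]_(u : V)
     (live_prob E p g * (if u \in reach g S then b u else 0))).
    apply: eq_bigr => g _; rewrite big_distrr /= big_mkcond /=.
    by apply: eq_bigr => u _; case: ifP => _ //; rewrite Rmult_0_r.
  rewrite exchange_big /=; apply: eq_bigr => u _.
  rewrite big_distrr /=; apply: eq_bigr => g _.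
  case: ifP => _; set L := live_prob E p g; field.
rewrite step2 /rsum [X in _ + X = _]big_mkcond /= -big_split /=.
apply: eq_bigr => u _.
rewrite (bigID (fun g => in_kept E g u)) /=.
have hAu : A u = \big[Rplus/0]_(i | in_kept E i u)
     (live_prob E p i * (if u \in reach i S then 1 else 0)).
  by apply: eq_bigr => g _; rewrite X_rr.
rewrite -hAu Rmult_plus_distr_l.
case: ifP => huS.
  have -> : \big[Rplus/0]_(i | ~~ in_kept E i u)
     (live_prob E p i * (if u \in reach i S then 1 else 0)) = rsum (fun g => ~~ in_kept E g u) (live_prob E p).
    apply: eq_bigr => g _.
    have -> : u \in reach g S.
      by rewrite /reach inE; apply/existsP; exists u; rewrite huS connect0.
    by rewrite Rmult_1_r.
  rewrite not_kept_sum /gamma; bring.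
rewrite big1; first bring.
move=> g hk.
case: (Req_dec (live_prob E p g) 0) => [->|hl]; first by rewrite Rmult_0_l.
case: ifP => hr; last by rewrite Rmult_0_r.
have := @reach_kept S g u hr (negbT huS) (@live_prob_sub V E p g hl).
by rewrite (negbTE hk).
Qed.

End IBS2.

Lemma exponent_any (T rho c v : R) : 0 < T -> 0 < rho -> 0 < c -> 0 <= v ->
  exists lam, 0 <= lam /\ lam * rho < 3 /\
   - lam * (rho * c / 3 + sqrt ((rho * c / 3) ^ 2 + 2 * c * T * v))
     + T * (3 / (2 * (3 - lam * rho))) * lam ^ 2 * v = - c.
Proof.
move=> hT hr hc hv.
case: (Rle_lt_dec v 0) => hv0.
  have -> : v = 0 by lra.
  have [h1 h2 h3 h4] := @exponent_zero T rho c hr hc.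
  by exists (3 / (2 * rho)).
have [h1 h2 h3 h4] := @exponent_pos T rho c v hT hr hc hv0.
by eexists; split; [exact: h1 | split; [exact: h2 | exact: h4]].
Qed.


Lemma inv_ge0 x : 0 <= x -> 0 <= / x.
Proof.
move=> h; case: (Req_dec x 0) => [->|hx]; first by rewrite Rinv_0; lra.
apply: Rlt_le; apply: Rinv_0_lt_compat; lra.
Qed.

Lemma rprod_le (I : finType) (F G : I -> R) :
  (forall i, 0 <= F i <= G i) -> rprod predT F <= rprod predT G.
Proof.
move=> h; rewrite /rprod.
have : 0 <= \big[Rmult/1]_(i | predT i) F i <= \big[Rmult/1]_(i | predT i) G i.
  apply: (big_ind2 (fun x y => 0 <= x <= y)); first lra.
    move=> x1 x2 y1 y2 [h1 h2] [h3 h4]; split; first by apply: Rmult_le_pos.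
    by apply: Rmult_le_compat.
  by move=> i _; apply: h.
by case.
Qed.

Lemma rprod_exp_const (T : nat) k :
  rprod predT (fun j : 'I_T => exp k) = exp (INR T * k).
Proof.
rewrite /rprod big_const_ord.
elim: T => [|n IH]; first by rewrite /= Rmult_0_l exp_0.
by rewrite iterS IH S_INR Rmult_plus_distr_r Rmult_1_l exp_plus Rmult_comm.
Qed.

Lemma rsum_const (T : nat) k :
  rsum predT (fun j : 'I_T => k) = INR T * k.
Proof.
rewrite /rsum big_const_ord.
elim: T => [|n IH]; first by rewrite /= Rmult_0_l.
rewrite iterS IH S_INR; ring.
Qed.

Section Main.
Variables (V : finType) (E : {set V * V}) (p : V -> V -> R) (b : V -> R).
Hypothesis hp : forall e, e \in E -> 0 < p e.1 e.2 < 1.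
Hypothesis hb : forall u, 0 <= b u.
Hypothesis hPhi : 0 < Phi E p b.
Variable S : {set V}.

Definition qq := rsum predT (fun Rs => ibs_prob E p b Rs * Xs V S Rs).
Definition Zf (Rs : {set V}) := rho E p b * (Xs V S Rs - qq).

Lemma gamma01 u : 0 <= gamma E p u <= 1.
Proof. rewrite -(@gamma_eq V E p u); exact: (@Kk_bounds V E p hp u). Qed.

Lemma ibsP_ge0 Rs : 0 <= ibs_prob E p b Rs.
Proof.
rewrite /ibs_prob; apply: rsum_ge0 => u _.
have [g0 _] := gamma01 u.
apply: Rmult_le_pos.
  rewrite /Rdiv; apply: Rmult_le_pos; first by apply: Rmult_le_pos.
  apply: Rlt_le; apply: Rinv_0_lt_compat; lra.
rewrite /Rdiv; apply: Rmult_le_pos.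
  by apply: rsum_ge0 => g _; exact: (@live_prob_ge0 V E p hp).
by apply: inv_ge0; apply: rsum_ge0 => g _; exact: (@live_prob_ge0 V E p hp).
Qed.

Lemma X01 Rs : Xs V S Rs = 0 \/ Xs V S Rs = 1.
Proof.
rewrite /Xs; case: #|_| => [|k]; first by left.
by right; rewrite (minn_idPl (ltn0Sn k)).
Qed.

Lemma sumP : rsum predT (ibs_prob E p b) = 1.
Proof.
rewrite -(@E_one V E p b hPhi); apply: eq_bigr => Rs _; by rewrite Rmult_1_r.
Qed.

Lemma E_fun (phi : R -> R) :
  rsum predT (fun Rs => ibs_prob E p b Rs * phi (Xs V S Rs)) = phi 0 + (phi 1 - phi 0) * qq.
Proof.
transitivity (rsum predT (fun Rs => phi 0 * (ibs_prob E p b Rs * 1) + (phi 1 - phi 0) * (ibs_prob E p b Rs * Xs V S Rs))).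
  apply: eq_bigr => Rs _; case: (X01 Rs) => ->; ring.
rewrite /qq /rsum big_split /= -!big_distrr /=.
have h1 := @E_one V E p b hPhi. rewrite /rsum in h1. rewrite h1.
ring.
Qed.

Lemma qq01 : 0 <= qq <= 1.
Proof.
split.
  apply: rsum_ge0 => Rs _; apply: Rmult_le_pos; first exact: ibsP_ge0.
  by case: (X01 Rs) => ->; lra.
rewrite -(@E_one V E p b hPhi); apply: rsum_le => Rs _.
apply: Rmult_le_compat_l; first exact: ibsP_ge0.
by case: (X01 Rs) => ->; lra.
Qed.

Hypothesis hGamma : 0 < Gamma b.

Lemma rho_pos : 0 < rho E p b.
Proof. rewrite /rho; apply: Rdiv_lt_0_compat => //. Qed.

Lemma mgf lam v : 0 <= lam -> lam * rho E p b < 3 ->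
  rho E p b ^ 2 * (qq * (1 - qq)) <= v ->
  rsum predT (fun Rs => ibs_prob E p b Rs * exp (lam * Zf Rs)) <=
  exp (3 / (2 * (3 - lam * rho E p b)) * lam ^ 2 * v).
Proof.
move=> hl hlr hv.
have hr := rho_pos.
have [hq0 hq1] := qq01.
have hlr0 : 0 <= lam * rho E p b by apply: Rmult_le_pos; lra.
have hK : 0 <= 3 / (2 * (3 - lam * rho E p b)).
  apply: Rlt_le; apply: Rdiv_lt_0_compat; lra.
have hpt : forall Rs, exp (lam * Zf Rs) <= 1 + lam * Zf Rs +
    3 / (2 * (3 - lam * rho E p b)) * (lam * Zf Rs) ^ 2.
  move=> Rs; apply: exp_bern; first lra.
  rewrite /Zf.
  have hx : Xs V S Rs - qq <= 1 by case: (X01 Rs) => ->; lra.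
  apply: Rmult_le_compat_l => //.
  rewrite -{2}(Rmult_1_r (rho E p b)); apply: Rmult_le_compat_l => //; lra.
move: hK hpt; move: (3 / (2 * (3 - lam * rho E p b))) => K hK hpt.
apply: (Rle_trans _ (rsum predT (fun Rs => ibs_prob E p b Rs *
   (fun x => 1 + lam * (rho E p b * (x - qq)) + K * (lam * (rho E p b * (x - qq))) ^ 2) (Xs V S Rs)))).
  apply: rsum_le => Rs _; apply: Rmult_le_compat_l; first exact: ibsP_ge0.
  exact: hpt.
rewrite (E_fun (fun x => 1 + lam * (rho E p b * (x - qq)) + K * (lam * (rho E p b * (x - qq))) ^ 2)) /=.
have -> : 1 + lam * (rho E p b * (0 - qq)) + K * (lam * (rho E p b * (0 - qq))) ^ 2 +
  (1 + lam * (rho E p b * (1 - qq)) + K * (lam * (rho E p b * (1 - qq))) ^ 2 -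
   (1 + lam * (rho E p b * (0 - qq)) + K * (lam * (rho E p b * (0 - qq))) ^ 2)) * qq
  = 1 + (K * lam ^ 2) * (rho E p b ^ 2 * (qq * (1 - qq))) by ring.
have hKl : 0 <= K * lam ^ 2 by apply: Rmult_le_pos => //; apply: pow2_ge_0.
apply: Rle_trans (exp_ineq1_le _).
have := Rmult_le_compat_l _ _ _ hKl hv.
intros; lra.
Qed.

Lemma total (T : nat) : rsum predT (@sample_prob V E p b T) = 1.
Proof.
rewrite /sample_prob.
rewrite -(@rsum_distr _ _ (fun (_ : 'I_T) (Rs : {set V}) => ibs_prob E p b Rs)).
rewrite /rprod big1 // => j _; exact: sumP.
Qed.

Lemma exp_sum (I : finType) lam (F : I -> R) :
  exp (lam * rsum predT F) = rprod predT (fun i => exp (lam * F i)).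
Proof.
rewrite /rsum /rprod.
apply: (big_morph (fun x => exp (lam * x))).
  by move=> x y; rewrite Rmult_plus_distr_l exp_plus.
by rewrite Rmult_0_r exp_0.
Qed.

Lemma chernoff (T : nat) (ev : pred {ffun 'I_T -> {set V}}) lam ts :
  0 <= lam -> (forall Rs, ev Rs -> ts < rsum predT (fun j => Zf (Rs j))) ->
  sample_Pr E p b ev <= exp (- lam * ts) *
     rprod predT (fun j : 'I_T => rsum predT (fun Rs => ibs_prob E p b Rs * exp (lam * Zf Rs))).
Proof.
move=> hl hev.
rewrite (@rsum_distr _ _ (fun (_ : 'I_T) Rs => ibs_prob E p b Rs * exp (lam * Zf Rs))).
rewrite /sample_Pr /rsum big_distrr /= big_mkcond [X in _ <= X]big_mkcond /=.
apply: (big_ind2 (fun x y => x <= y)); first lra.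
  by move=> x1 x2 y1 y2 h1 h2; lra.
move=> Rs _.
have hsp : 0 <= sample_prob E p b Rs.
  by apply: rprod_ge0 => j _; exact: ibsP_ge0.
have -> : rprod predT (fun i => ibs_prob E p b (Rs i) * exp (lam * Zf (Rs i))) =
   sample_prob E p b Rs * exp (lam * rsum predT (fun j => Zf (Rs j))).
  by rewrite exp_sum /sample_prob /rprod big_split.
move: (rsum predT (fun j => Zf (Rs j))) (hev Rs) => sv hsv.
rewrite -Rmult_assoc (Rmult_comm (exp _)) Rmult_assoc -exp_plus.
case: (ev Rs) hsv => [/(_ isT) hlt|_].
  have : 0 <= - lam * ts + lam * sv by nra.
  move=> h; have := exp_ineq1_le (- lam * ts + lam * sv).
  move=> h2; have : 1 <= exp (- lam * ts + lam * sv) by lra.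
  move=> h3; have := Rmult_le_compat_l _ _ _ hsp h3. rewrite Rmult_1_r. done.
apply: Rmult_le_pos => //; apply: Rlt_le; exact: exp_pos.
Qed.

End Main.

Theorem lemma6 (V : finType) (E : {set V * V}) (p : V -> V -> R) (b : V -> R)
  (hp : forall e, e \in E -> 0 < p e.1 e.2 < 1)
  (hb : forall u, 0 <= b u)
  (hGamma : 0 < Gamma b)
  (hPhi : 0 < Phi E p b)
  (delta : R) (hdelta : 0 < delta < 1)
  (S : {set V}) (T : nat) (hT : (0 < T)%nat) :
  sample_Pr E p b
    (fun Rs : {ffun 'I_T -> {set V}} =>
       Rleb (f_l E p b S Rs delta) (benefit E p b S))
  >= 1 - delta.
Proof.
suff hfail : sample_Pr E p b
    (fun Rs : {ffun 'I_T -> {set V}} =>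
       ~~ Rleb (f_l E p b S Rs delta) (benefit E p b S)) <= delta.
  have := total V E p b hPhi T.
  rewrite /sample_Pr /rsum in hfail *.
  rewrite (bigID (fun Rs : {ffun 'I_T -> {set V}} => Rleb (f_l E p b S Rs delta) (benefit E p b S))) /=.
  move: hfail; abs_big; intros; lra.
have hr := rho_pos V E p b hPhi hGamma.
have [hq0 hq1] := qq01 V E p b hp hb hPhi S.
set C := rsum (fun v => v \in S) (fun v => (1 - gamma E p v) * b v).
have hC : 0 <= C.
  apply: rsum_ge0 => v _; have := gamma01 V E p hp v; have := hb v.
  move=> h1 h2; apply: Rmult_le_pos => //; lra.
have hB := benefit_split V E p b hp hPhi S.
rewrite -/C -/(qq V E p b S) in hB.
set c := ln (1 / delta).
have hc : 0 < c.
  rewrite /c -ln_1; apply: ln_increasing; first lra.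
  apply: (Rmult_lt_reg_r delta); first lra.
  have -> : 1 / delta * delta = 1 by field; lra.
  lra.
have hT' : 0 < INR T by apply: lt_0_INR; apply/ltP.
set q := qq V E p b S in hq0 hq1 hB.
set rh := rho E p b in hr.
set G := Gamma b in hGamma.
set Ph := Phi E p b in hPhi hB.
set B := benefit E p b S in hB.
have hrh : rh = Ph / G by [].
have hmn : mu_min E p b S = C / G by [].
have hmn0 : 0 <= C / G by apply: Rdiv_le_0_compat.
set m := B / G.
have hm : m = rh * q + C / G by rewrite /m -hB hrh; field; lra.
have hm0 : 0 <= m by rewrite hm; have := Rmult_le_pos _ _ (Rlt_le _ _ hr) hq0; lra.
set P0 := pS E p b S.
have hP0def : P0 = Rmin rh ((rh + C / G) + C / G - 2 * sqrt (C / G * (rh + C / G))) by [].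
have hP0 : 0 <= P0 by rewrite hP0def; apply: P_ge0.
have hv : rh ^ 2 * (q * (1 - q)) <= P0 * m.
  by rewrite hm; apply: var_bound => //; lra.
have hv0 : 0 <= P0 * m by apply: Rmult_le_pos.
have [lam [hl [hlr hexp]]] := @exponent_any (INR T) rh c (P0 * m) hT' hr hc hv0.
set K := 3 / (2 * (3 - lam * rh)) in hexp.
set ts := rh * c / 3 + sqrt ((rh * c / 3) ^ 2 + 2 * c * INR T * (P0 * m)) in hexp.
have hBm : B = G * m by rewrite /m; field; lra.
have hev : forall Rs : {ffun 'I_T -> {set V}}, ~~ Rleb (f_l E p b S Rs delta) B ->
    ts < rsum predT (fun j => Zf V E p b S (Rs j)).
  move=> Rs; rewrite /Rleb; case: Rle_dec => // hnle _.
  have hlt := Rnot_le_lt _ _ hnle.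
  have hsZ : rsum predT (fun j => Zf V E p b S (Rs j)) =
      rh * (rsum predT (fun j => Xs V S (Rs j)) - INR T * q).
    transitivity (rh * rsum predT (fun j => Xs V S (Rs j) + - q)).
      by rewrite /rsum big_distrr /=; apply: eq_bigr => j _.
    have := rsum_const T (- q).
    rewrite /rsum big_split /= => ->.
    ring.
  have hBh : Bhat E p b S Rs = G * (m + rsum predT (fun j => Zf V E p b S (Rs j)) / INR T).
    rewrite hsZ /Bhat /m -/C -/Ph.
    change (Ph / INR T * rsum predT (fun j => Xs V S (Rs j)) + C =
      G * (B / G + rh * (rsum predT (fun j => Xs V S (Rs j)) - INR T * q) / INR T)).
    rewrite -hB hrh.
    abs_big; field; lra.
  move: hlt; rewrite /f_l; cbv beta zeta; rewrite -/c -/P0 -/rh -/G hBh hBm => hlt.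
  have h1 := Rlt_le_trans _ _ _ hlt (Rmin_l _ _).
  have h2 := Rlt_le_trans _ _ _ hlt (Rmin_r _ _).
  exact: (@alg_fail G (INR T) rh c P0 m _ hGamma hT' hr hc hP0 hm0 h1 h2).
apply: Rle_trans (chernoff V E p b hp hb hPhi S T _ lam ts hl hev) _.
have hmgf := mgf V E p b hp hb hPhi S hGamma lam (P0 * m) hl hlr hv.
rewrite -/rh -/K in hmgf.
have hprod : rprod predT (fun j : 'I_T => rsum predT
      (fun Rs => ibs_prob E p b Rs * exp (lam * Zf V E p b S Rs))) <=
    rprod predT (fun j : 'I_T => exp (K * lam ^ 2 * (P0 * m))).
  apply: rprod_le => j; split => //.
  apply: rsum_ge0 => Rs _; apply: Rmult_le_pos; first exact: ibsP_ge0.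
  apply: Rlt_le; exact: exp_pos.
rewrite rprod_exp_const in hprod.
apply: Rle_trans (Rmult_le_compat_l _ _ _ (Rlt_le _ _ (exp_pos _)) hprod) _.
rewrite -exp_plus.
have -> : - lam * ts + INR T * (K * lam ^ 2 * (P0 * m)) = - c.
  rewrite -hexp; ring.
rewrite /c exp_Ropp exp_ln; last first.
  apply: Rdiv_lt_0_compat; lra.
right; field; lra.
Qed.
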